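(* Let $X$ be a Banach space and $C>0$. The following assertions are equivalent. (1) For every Banach space $Y$ and every bounded linear operator $T\colon X\to Y$, $\gamma(T^* )\leq C\cdot\operatorname{uc}(T)$. (1') For every bounded linear operator $T\colon X\to\ell^\infty$, $\gamma(T^* )\leq C\cdot\operatorname{uc}(T)$. (2) For every bounded set $K\subset X^*$, $\gamma(K)\leq C\cdot\eta(K)$.
   Context: Scalars may be real or complex. For a bounded sequence $(y_n)$ in a Banach space, $\operatorname{ca}((y_n))=\inf_{n\in\mathbb N}\sup\{\|y_k-y_l\|: k,l\geq n\}$. For a bounded linear operator $T\colon X\to Y$, $$\operatorname{uc}(T)=\sup\Big\{\operatorname{ca}\Big(\big(\textstyle\sum_{i=1}^n Tx_i\big)_n\Big):\ (x_n)\subset X,\ \sup_{x^*\in B_{X^*}}\sum_{n=1}^\infty|x^*(x_n)|\leq 1\Big\}.$$ For a bounded subset $A$ of a Banach space $E$, $\gamma(A)=\sup\{|\lim_n\lim_m x^*_m(x_n)-\lim_m\lim_n x^*_m(x_n)|\}$, the supremum taken over all sequences $(x_n)$ in $A$ and $(x_m^* )$ in $B_{E^*}$ for which the iterated limits exist. For the adjoint $T^*\colon Y^*\to X^*$, $\gamma(T^* )=\gamma(T^*(B_{Y^*}))$ computed in $X^*$. For a bounded $K\subset X^*$, $$\eta(K)=\sup\Big\{\limsup_n\sup_{x^*\in K}|x^*(x_n)|:\ (x_n)\subset X,\ \sup_{x^*\in B_{X^*}}\sum_{n=1}^\infty|x^*(x_n)|\leq 1\Big\},$$ and $\gamma(K)$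 is computed in $X^*$. *)

(* Defs.v *)
From HB Require Import structures.
From mathcomp Require Import all_boot all_order all_algebra.
From mathcomp Require Import all_classical all_reals all_analysis.
From mathcomp Require Export complex.
Export numFieldNormedType.Exports.

Unset Printing Implicit Defensive.

Import Order.TTheory GRing.Theory Num.Theory.
Local Open Scope classical_set_scope.
Local Open Scope ring_scope.

(* Scalars: a numFieldType K (instantiated with R or R[i] in the statement),
   together with nK : K -> R which turns the (real-valued) norms/moduli living
   in K into genuine reals (nK = id for K = R, nK = Re for K = R[i]). *)
Section BanachQuantities.
Variables (R : realType) (K : numFieldType) (nK : K -> R).

Definition linear_on (Y : lmodType K) (S : set Y) (g : Y -> K) : Prop :=
  forall (a : K) (y z : Y), S y -> S z -> g (a *: y + z) = a * g y + g z.

Definition dual_ball_on (Y : lmodType K) (S : set Y) (nY : Y -> R)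
  : set (Y -> K) :=
  [set g | linear_on Y S g /\ forall y, S y -> nK `|g y| <= nY y].

Definition dual_ball (X : normedModType K) : set (X -> K) :=
  dual_ball_on X setT (fun x => nK `|x|).

Definition dual_space (X : normedModType K) : set (X -> K) :=
  [set f | linear_on X setT f /\ exists M : R, forall x, nK `|f x| <= M * nK `|x|].

Definition dual_norm (X : normedModType K) (f : X -> K) : R :=
  sup [set nK `|f x| | x in [set x : X | nK `|x| <= 1]].

Definition bidual_ball (X : normedModType K) : set ((X -> K) -> K) :=
  dual_ball_on (X -> K) (dual_space X) (dual_norm X).

(* bounded linear operators (linearity is given by the type {linear _ -> _}) *)
Definition bounded_op (X Y : normedModType K) (T : X -> Y) : Prop :=
  exists M : R, forall x, nK `|T x| <= M * nK `|x|.

Definition wuc (X : normedModType K) (x : nat -> X) : Prop :=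
  forall f, dual_ball X f -> (\sum_(0 <= n <oo) (nK `|f (x n)|)%:E <= 1)%E.

Definition ca (Y : zmodType) (nY : Y -> R) (y : nat -> Y) : \bar R :=
  ereal_inf [set ereal_sup [set (nY (y kl.1 - y kl.2))%:E
                           | kl in [set kl : nat * nat | (n <= kl.1)%N /\ (n <= kl.2)%N]]
            | n in [set: nat]].

Definition uc (X : normedModType K) (Y : zmodType) (nY : Y -> R) (T : X -> Y)
  : \bar R :=
  ereal_sup [set ca Y nY (fun n => \sum_(i < n.+1) T (x i)) | x in [set x | wuc X x]].

Definition iter_lims (u : nat -> nat -> K) (a1 a2 : K) : Prop :=
  exists L1 L2 : nat -> K,
    (forall n, u n @ \oo --> L1 n) /\ (L1 @ \oo --> a1) /\
    (forall m, (fun n => u n m) @ \oo --> L2 m) /\ (L2 @ \oo --> a2).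

(* gamma(A) for A a subset of a space E whose dual unit ball is Bd *)
Definition gamma_in (E : Type) (Bd : set (E -> K)) (A : set E) : \bar R :=
  ereal_sup [set r | exists (x : nat -> E) (phi : nat -> E -> K) (a1 a2 : K),
               (forall n, A (x n)) /\ (forall m, Bd (phi m)) /\
               iter_lims (fun n m => phi m (x n)) a1 a2 /\
               r = (nK `|a1 - a2|)%:E].

Definition gamma_dual (X : normedModType K) (A : set (X -> K)) : \bar R :=
  gamma_in (X -> K) (bidual_ball X) A.

Definition eta (X : normedModType K) (A : set (X -> K)) : \bar R :=
  ereal_sup [set limn_esup (fun n => ereal_sup [set (nK `|f (x n)|)%:E | f in A])
            | x in [set x | wuc X x]].

Definition bounded_dual_set (X : normedModType K) (A : set (X -> K)) : Prop :=
  (forall f, A f -> linear_on X setT f) /\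
  exists M : R, forall f x, A f -> nK `|f x| <= M * nK `|x|.

(* l^infty over K, modelled inside nat -> K *)
Definition linf_set : set (nat -> K) :=
  [set y | exists M : R, forall n, nK `|y n| <= M].
Definition linf_norm (y : nat -> K) : R := sup (range (fun n => nK `|y n|)).

Definition assertion1 (X : completeNormedModType K) (C : R) : Prop :=
  forall (Y : completeNormedModType K) (T : {linear X -> Y}),
    bounded_op X Y T ->
    (gamma_dual X [set g \o T | g in dual_ball Y]
       <= C%:E * uc X Y (fun y : Y => nK `|y|) T)%E.

Definition assertion1' (X : completeNormedModType K) (C : R) : Prop :=
  forall T : {linear X -> (nat -> K)},
    (exists M : R, forall x n, nK `|T x n| <= M * nK `|x|) ->
    (gamma_dual X [set g \o T | g in dual_ball_on (nat -> K) linf_set linf_norm]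
       <= C%:E * uc X (nat -> K) linf_norm T)%E.

Definition assertion2 (X : completeNormedModType K) (C : R) : Prop :=
  forall A : set (X -> K), bounded_dual_set X A ->
    (gamma_dual X A <= C%:E * eta X A)%E.

End BanachQuantities.

(* Main.v *)
Require Import Defs.
From HB Require Import structures.
From mathcomp Require Import all_boot all_order all_algebra.
From mathcomp Require Import all_classical all_reals all_analysis.
From mathcomp Require Import complex.
From mathcomp Require Import lra.
Import numFieldNormedType.Exports.
Import Order.TTheory GRing.Theory Num.Theory.
Local Open Scope classical_set_scope.
Local Open Scope ring_scope.
Set Implicit Arguments.
Unset Strict Implicit.

Lemma esup_lb (R : realType) (w : nat -> \bar R) (a : \bar R) :
  (forall j, (a <= w j)%E) -> (a <= limn_esup w)%E.
Proof.
move=> H; rewrite /limn_esup /limf_esup; apply: le_ereal_inf_tmp => _ [V [M _ HM] <-].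
apply: le_trans (H M) _; apply: ereal_sup_ubound; exists M => //; by apply: HM => /=.
Qed.

Lemma ereal_le_from_reals (R : realType) (x y : \bar R) :
  (forall r : R, 0 <= r -> (r%:E < x)%E -> (r%:E <= y)%E) -> (0 <= y)%E -> (x <= y)%E.
Proof.
case: y => [e| |] H y0.
- case: x H => [c| |] H.
  + rewrite lee_fin; rewrite lee_fin in y0; case: (lerP c e) => // ec.
    have h := H ((e + c) / 2).
    have : ((((e + c) / 2)%R)%:E <= e%:E)%E.
      apply: h; first by rewrite divr_ge0 // addr_ge0 // (le_trans y0 (ltW ec)).
      by rewrite lte_fin; clear H; lra.
    rewrite lee_fin => ?; exfalso; clear H h; lra.
  + have h := H (e + 1).
    have : (((e + 1)%R)%:E <= e%:E)%E.
      by apply: h; [rewrite addr_ge0 //; rewrite lee_fin in y0| rewrite ltry].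
    rewrite lee_fin => ?; exfalso; clear H h; rewrite lee_fin in y0; lra.
  + by rewrite leNye.
- by rewrite leey.
- by move: y0; rewrite leeNy_eq.
Qed.

Section Gen.
Variables (R : realType) (K : numFieldType) (nK : K -> R).
Hypotheses (nK0 : nK 0 = 0) (nKge0 : forall a : K, 0 <= nK `|a|)
  (nKD : forall a b : K, nK `|a + b| <= nK `|a| + nK `|b|).

Lemma linf_norm_le (y : nat -> K) (M : R) :
  (forall n, nK `|y n| <= M) -> linf_norm R K nK y <= M.
Proof.
move=> H; apply: ge_sup; first by exists (nK `|y 0%N|), 0%N.
by move=> _ [n _ <-].
Qed.

Lemma lin_add (X : lmodType K) (f : X -> K) : linear_on K X setT f ->
  forall y z, f (y + z) = f y + f z.
Proof. by move=> fl y z; have := fl 1 y z I I; rewrite scale1r mul1r. Qed.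

Lemma lin0 (X : lmodType K) (f : X -> K) : linear_on K X setT f -> f 0 = 0.
Proof.
move=> fl; have h := lin_add fl 0 0; rewrite addr0 in h.
by apply: (@addrI _ (f 0)); rewrite addr0 -h.
Qed.

Lemma lin_sum (X : lmodType K) (f : X -> K) (I : Type) (s : seq I) (F : I -> X) :
  linear_on K X setT f -> f (\sum_(i <- s) F i) = \sum_(i <- s) f (F i).
Proof.
move=> fl; elim: s => [|a s IH]; first by rewrite !big_nil (lin0 fl).
by rewrite !big_cons (lin_add fl) IH.
Qed.

Lemma nK_sum (I : Type) (s : seq I) (F : I -> K) :
  nK `|\sum_(i <- s) F i| <= \sum_(i <- s) nK `|F i|.
Proof.
elim: s => [|a s IH]; first by rewrite !big_nil normr0 nK0.
by rewrite !big_cons; apply: le_trans (nKD _ _) _; rewrite lerD2l.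
Qed.

Lemma sub_blk (F : nat -> K) l k : (l < k)%N ->
  \sum_(i < k.+1) F i - \sum_(i < l.+1) F i = \sum_(l.+1 <= i < k.+1) F i.
Proof.
move=> lk; rewrite -!(big_mkord xpredT) (@big_cat_nat _ _ _ l.+1) //=.
  by rewrite [X in X - _]addrC addrK.
by rewrite ltnS ltnW.
Qed.

Lemma sub_blkR (F : nat -> R) l k : (l <= k)%N ->
  \sum_(i < k) F i = \sum_(i < l) F i + \sum_(l <= i < k) F i.
Proof.
by move=> lk; rewrite -!(big_mkord xpredT) (@big_cat_nat _ _ _ l).
Qed.

Lemma uc_le_eta (X : normedModType K) (x : nat -> X -> K) (A : set (X -> K)) :
  (forall n, linear_on K X setT (x n)) -> (forall n, A (x n)) ->
  (uc R K nK X (nat -> K) (linf_norm R K nK) (fun v n => x n v)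
     <= Defs.eta R K nK X A)%E.
Proof.
move=> xl Ax.
apply: ge_ereal_sup => _ [z wz <-].
have eta0 : (0 <= Defs.eta R K nK X A)%E.
  apply: le_trans; last first.
    apply: ereal_sup_ubound; exists (fun _ => 0) => //.
    move=> f [fl _] /=; rewrite (lin0 fl) normr0 nK0 eseries0 //.
  apply: esup_lb => j; apply: le_trans; last first.
    by apply: ereal_sup_ubound; exists (x 0%N).
  by rewrite /= (lin0 (xl 0%N)) normr0 nK0.
apply: ereal_le_from_reals => // r r0 rca.
have Sn : forall m n, (\sum_(i < m.+1) x^~ (z i)) n = \sum_(i < m.+1) x n (z i).
  by move=> m n; rewrite fct_sumE.
have step1 : forall N, exists p : nat * nat * nat, ((N <= p.1.1)%N && (p.1.1 < p.1.2)%N) /\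
    r < nK `|x p.2 (\sum_(p.1.1.+1 <= i < p.1.2.+1) z i)|.
  move=> N.
  have : (r%:E < ereal_sup [set (linf_norm R K nK
      ((\sum_(i < kl.1.+1) x^~ (z i)) - (\sum_(i < kl.2.+1) x^~ (z i))))%:E
      | kl in [set kl : nat * nat | (N <= kl.1)%N /\ (N <= kl.2)%N]])%E.
    by apply: lt_le_trans rca _; apply: ereal_inf_lbound; exists N.
  case/ereal_sup_gt => _ [[a b] /= [Na Nb] <-]; rewrite lte_fin => rl.
  have [n rn] : exists n, r < nK `|((\sum_(i < a.+1) x^~ (z i)) - (\sum_(i < b.+1) x^~ (z i))) n|.
    apply/not_existsP => H.
    have : linf_norm R K nK ((\sum_(i < a.+1) x^~ (z i)) - (\sum_(i < b.+1) x^~ (z i))) <= r.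
      by apply: linf_norm_le => n; rewrite leNgt; apply/negP/H.
    by rewrite leNgt rl.
  have subf : forall (f g : nat -> K) n, (f - g) n = f n - g n by [].
  move: rn; rewrite subf !Sn.
  case: (ltngtP a b) => ab.
  - rewrite -opprB normrN (sub_blk (fun i => x n (z i))) // -lin_sum // => rn.
    by exists (a, b, n); rewrite /= Na ab.
  - rewrite (sub_blk (fun i => x n (z i))) // -lin_sum // => rn.
    by exists (b, a, n); rewrite /= Nb ab.
  - by rewrite ab subrr normr0 nK0 => /(le_lt_trans r0); rewrite ltxx.
have [g Hg] := choice step1.
pose Ns j := iter j (fun N => (g N).1.2.+1) 0%N.
pose u j := \sum_((g (Ns j)).1.1.+1 <= i < (g (Ns j)).1.2.+1) z i.
have key : forall f, linear_on K X setT f -> forall J,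
    \sum_(j < J) nK `|f (u j)| <= \sum_(i < Ns J) nK `|f (z i)|.
  move=> f fl; elim => [|J IH]; first by rewrite !big_ord0.
  rewrite big_ord_recr /=.
  have [/andP [Nl lk] _] := Hg (Ns J).
  set l := (g (Ns J)).1.1 in Nl lk *; set k := (g (Ns J)).1.2 in lk *.
  rewrite (@sub_blkR (fun i => nK `|f (z i)|) (Ns J) k.+1); last first.
    exact: leq_trans Nl (leqW (ltnW lk)).
  apply: lerD; first exact: IH.
  rewrite (@big_cat_nat _ _ _ l.+1 (Ns J) k.+1 xpredT (fun i => nK `|f (z i)|) (leqW Nl) (ltnW lk)) /=.
  apply: le_trans; last first.
    by apply: lerD; [apply: sumr_ge0 => i _; exact: nKge0 | exact: lexx].
  rewrite add0r /u -/l -/k lin_sum //.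
  exact: nK_sum.
have wu : wuc R K nK X u.
  move=> f [fl fb].
  have le1 : forall J, (\sum_(0 <= j < J) (nK `|f (u j)|)%:E <= 1)%E.
    move=> J; rewrite sumEFin big_mkord.
    apply: le_trans (wz f (conj fl fb)).
    apply: le_trans; last first.
      by apply: (@nneseries_lim_ge _ _ xpredT 0%N (Ns J)) => n _ _; rewrite lee_fin.
    by rewrite sumEFin big_mkord lee_fin; exact: key.
  apply: lime_le.
    by apply: is_cvg_nneseries => n _ _; rewrite lee_fin.
  by apply: nearW => J; exact: le1.
apply: le_trans; last first.
  by apply: ereal_sup_ubound; exists u.
apply: esup_lb => j; apply: le_trans; last first.
  by apply: ereal_sup_ubound; exists (x (g (Ns j)).2).
by rewrite lee_fin ltW //; have [_ ->] := Hg (Ns j).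
Qed.
End Gen.

Section TDdef.
Variables (K : numFieldType) (X : normedModType K) (x : nat -> X -> K).
Hypothesis xl : forall n, linear_on K X setT (x n).
Definition TD (v : X) : nat -> K := fun n => x n v.
Lemma TD_lin : linear_for *:%R TD.
Proof.
move=> a u v; apply/funext => n /=.
rewrite /TD; have := @xl n a u v I I => ->; by [].
Qed.
HB.instance Definition _ := GRing.isLinear.Build K X (nat -> K) *:%R TD TD_lin.
Definition TDl : {linear X -> nat -> K} := TD.
End TDdef.

Section Gen2.
Variables (R : realType) (K : numFieldType) (nK : K -> R).
Hypotheses (nK0 : nK 0 = 0) (nKge0 : forall a : K, 0 <= nK `|a|)
  (nKD : forall a b : K, nK `|a + b| <= nK `|a| + nK `|b|).

Lemma onep_two (X : completeNormedModType K) (C : R) : 0 <= C ->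
  assertion1' R K nK X C -> assertion2 R K nK X C.
Proof.
move=> C0 H1 A [Alin [M HM]].
apply: ge_ereal_sup => _ [x [phi [a1 [a2 [HA [HB [HI ->]]]]]]].
have xl n : linear_on K X setT (x n) by apply: Alin.
have bT : exists M : R, forall v n, nK `|TDl xl v n| <= M * nK `|v|.
  by exists M => v n; apply: HM.
have h1 := H1 (TDl xl) bT.
apply: le_trans; last first.
  apply: le_trans h1 _.
  apply: lee_wpmul2l; first by rewrite lee_fin.
  exact: (uc_le_eta nK0 nKge0 nKD xl HA).
apply: ereal_sup_ubound; exists x, phi, a1, a2; split => //.
move=> n; exists (fun y => y n); last by apply/funext.
split; first by move=> a y z _ _.
move=> y [Mb Hb]; apply: ub_le_sup; last by exists n.
by exists Mb => _ [m _ <-]; apply: Hb.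
Qed.
End Gen2.

Section GenA.
Variables (R : realType) (K : numFieldType) (nK : K -> R).

Lemma gamma_mono (E : Type) (Bd : set (E -> K)) (A B : set E) :
  A `<=` B -> (gamma_in R K nK E Bd A <= gamma_in R K nK E Bd B)%E.
Proof.
move=> AB; apply: ereal_sup_le => r [x [phi [a1 [a2 [HA [HB [HI ->]]]]]]].
by exists x, phi, a1, a2; split => // n; apply: AB.
Qed.

Lemma eta_le_uc (X : normedModType K) (Z : zmodType) (nY : Z -> R)
  (T : X -> Z) (A : set (X -> K)) :
  (forall f x, A f -> nK `|f x| <= nY (T x)) ->
  (Defs.eta R K nK X A <= uc R K nK X Z nY T)%E.
Proof.
move=> HA; apply: ge_ereal_sup => _ [x wx <-].
apply: le_trans; last first.
  by apply: ereal_sup_ubound; exists x.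
apply: le_ereal_inf_tmp => _ [N _ <-].
rewrite /limn_esup /limf_esup.
apply: (@le_trans _ _ (ereal_sup ((fun n => ereal_sup [set (nK `|f (x n)|)%:E | f in A]) @` [set k | (N < k)%N]))).
  apply: ereal_inf_lbound; exists [set k | (N < k)%N] => //.
  by exists N.+1 => //.
apply: ge_ereal_sup => _ [k /= Nk <-].
case: k Nk => [//|k] Nk.
apply: ge_ereal_sup => _ [f Af <-].
apply: le_trans; last first.
  apply: ereal_sup_ubound; exists (k.+1, k) => //=.
  by split => //; apply: ltnW.
rewrite lee_fin big_ord_recr /= addrC addrK.
exact: HA.
Qed.


Lemma two_one (X : completeNormedModType K) (C : R) : 0 <= C ->
  assertion2 R K nK X C -> assertion1 R K nK X C.
Proof.
move=> C0 H2 Y T [M HM].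
set A := [set g \o T | g in dual_ball R K nK Y].
have bA : bounded_dual_set R K nK X A.
  split.
    move=> _ [g [gl gb] <-] a x y _ _ /=.
    by rewrite linearP; apply: gl.
  exists M => _ x [g [gl gb] <-] /=.
  by apply: le_trans (HM x); apply: gb.
apply: le_trans (H2 A bA) _.
apply: lee_wpmul2l; first by rewrite lee_fin.
apply: eta_le_uc => _ x [g [gl gb] <-] /=.
exact: gb.
Qed.



Lemma two_onep (X : completeNormedModType K) (C : R) : 0 <= C ->
  assertion2 R K nK X C -> assertion1' R K nK X C.
Proof.
move=> C0 H2 T [M HM].
have Tin x : linf_set R K nK (T x) by exists (M * nK `|x|).
set A := [set g \o T | g in dual_ball_on R K nK (nat -> K) (linf_set R K nK) (linf_norm R K nK)].
have bA : bounded_dual_set R K nK X A.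
  split.
    move=> _ [g [gl gb] <-] a x y _ _ /=.
    by rewrite linearP; apply: gl.
  exists M => _ x [g [gl gb] <-] /=.
  by apply: le_trans (gb _ (Tin x)) _; apply: linf_norm_le.
apply: le_trans (H2 A bA) _.
apply: lee_wpmul2l; first by rewrite lee_fin.
apply: eta_le_uc => _ x [g [gl gb] <-] /=.
exact: gb.
Qed.

End GenA.

Section Linf.
Variables (R : realType) (K : numFieldType) (nK : K -> R) (emb : {rmorphism R -> K}).
Hypotheses (embK : forall r, nK (emb r) = r)
  (normE : forall k : K, `|k| = emb (nK `|k|))
  (emb_le : forall r s, (emb r <= emb s) = (r <= s)).

Record linf := Linf { lval : nat -> K; lvalP : linf_set R K nK lval }.

Lemma linf_eq (y z : linf) : lval y = lval z -> y = z.
Proof.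
case: y z => [y yP] [z zP] /= yz; subst z.
by rewrite (Prop_irrelevance yP zP).
Qed.

HB.instance Definition _ := gen_eqMixin linf.
HB.instance Definition _ := gen_choiceMixin linf.

Lemma nK0 : nK 0 = 0.
Proof. by rewrite -(rmorph0 emb) embK. Qed.

Lemma nKge0 (a : K) : 0 <= nK `|a|.
Proof. by rewrite -emb_le rmorph0 -normE. Qed.

Lemma nKD (a b : K) : nK `|a + b| <= nK `|a| + nK `|b|.
Proof. by rewrite -emb_le rmorphD -!normE ler_normD. Qed.

Lemma nKM (a b : K) : nK `|a * b| = nK `|a| * nK `|b|.
Proof. by rewrite normrM {1}(normE a) {1}(normE b) -rmorphM embK. Qed.

Lemma nKN (a : K) : nK `|- a| = nK `|a|.
Proof. by rewrite normrN. Qed.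

Lemma nK_eq0 (a : K) : nK `|a| = 0 -> a = 0.
Proof. by move=> h; apply/normr0_eq0; rewrite normE h rmorph0. Qed.

Let lnorm := linf_norm R K nK.

Lemma ln_ub (y : nat -> K) n : linf_set R K nK y -> nK `|y n| <= lnorm y.
Proof.
move=> [M HM]; apply: ub_le_sup; last by exists n.
by exists M => _ [m _ <-].
Qed.

Lemma ln_le (y : nat -> K) (M : R) :
  (forall n, nK `|y n| <= M) -> lnorm y <= M.
Proof.
move=> H; apply: ge_sup; first by exists (nK `|y 0%N|), 0%N.
by move=> _ [n _ <-].
Qed.

Lemma ln_ge0 (y : nat -> K) : linf_set R K nK y -> 0 <= lnorm y.
Proof. by move=> yP; apply: le_trans (ln_ub 0 yP); apply: nKge0. Qed.

Lemma linf_setD (y z : nat -> K) : linf_set R K nK y -> linf_set R K nK z ->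
  linf_set R K nK (y + z).
Proof.
move=> [M HM] [N HN]; exists (M + N) => n /=.
by apply: le_trans (nKD _ _) _; apply: lerD.
Qed.

Lemma linf_setZ (a : K) (y : nat -> K) : linf_set R K nK y ->
  linf_set R K nK (a *: y).
Proof.
move=> [M HM]; exists (nK `|a| * M) => n /=.
by rewrite nKM; apply: ler_wpM2l; [apply: nKge0 | apply: HM].
Qed.

Lemma linf_set0 : linf_set R K nK 0.
Proof. by exists 0 => n; rewrite normr0 nK0. Qed.

Definition l0 := Linf linf_set0.
Definition ladd (y z : linf) := Linf (linf_setD (lvalP y) (lvalP z)).
Definition lopp (y : linf) := Linf (linf_setZ (-1) (lvalP y)).
Definition lscale (a : K) (y : linf) := Linf (linf_setZ a (lvalP y)).

Lemma laddA : associative ladd.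
Proof. by move=> x y z; apply: linf_eq; rewrite /= addrA. Qed.
Lemma laddC : commutative ladd.
Proof. by move=> x y; apply: linf_eq; rewrite /= addrC. Qed.
Lemma ladd0 : left_id l0 ladd.
Proof. by move=> x; apply: linf_eq; rewrite /= add0r. Qed.
Lemma laddN : left_inverse l0 lopp ladd.
Proof. by move=> x; apply: linf_eq; rewrite /= scaleN1r addNr. Qed.

HB.instance Definition _ := GRing.isZmodule.Build linf laddA laddC ladd0 laddN.

Lemma lscaleA a b v : lscale a (lscale b v) = lscale (a * b) v.
Proof. by apply: linf_eq; rewrite /= scalerA. Qed.
Lemma lscale1 : left_id 1 lscale.
Proof. by move=> v; apply: linf_eq; rewrite /= scale1r. Qed.
Lemma lscaleDr : right_distributive lscale +%R.
Proof. by move=> a u v; apply: linf_eq; rewrite /= scalerDr. Qed.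
Lemma lscaleDl v : {morph lscale^~ v : a b / a + b}.
Proof. by move=> a b; apply: linf_eq; rewrite /= scalerDl. Qed.

HB.instance Definition _ := GRing.Zmodule_isLmodule.Build K linf
  lscaleA lscale1 lscaleDr lscaleDl.

Lemma lvalD (y z : linf) : lval (y + z) = lval y + lval z. Proof. by []. Qed.
Lemma lvalZ a (y : linf) : lval (a *: y) = a *: lval y. Proof. by []. Qed.
Lemma lvalN (y : linf) : lval (- y) = - lval y.
Proof. by rewrite /= scaleN1r. Qed.
Lemma lvalB (y z : linf) : lval (y - z) = lval y - lval z.
Proof. by rewrite lvalD lvalN. Qed.
Lemma lval0 : lval 0 = 0. Proof. by []. Qed.
Lemma lval_sum (I : Type) (s : seq I) (F : I -> linf) :
  lval (\sum_(i <- s) F i) = \sum_(i <- s) lval (F i).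
Proof.
elim: s => [|a s IH]; first by rewrite !big_nil.
by rewrite !big_cons lvalD IH.
Qed.

Definition lnormK (y : linf) : K := emb (lnorm (lval y)).

Lemma ln_D (y z : linf) : lnorm (lval (y + z)) <= lnorm (lval y) + lnorm (lval z).
Proof.
apply: ln_le => n; apply: le_trans (nKD _ _) _.
by apply: lerD; apply: ln_ub; apply: lvalP.
Qed.

Lemma ln_Z a (y : linf) : lnorm (lval (a *: y)) = nK `|a| * lnorm (lval y).
Proof.
apply/le_anti/andP; split.
  apply: ln_le => n; rewrite lvalZ.
  have -> : (a *: lval y) n = a * lval y n by [].
  by rewrite nKM; apply: ler_wpM2l; [apply: nKge0 | apply: ln_ub; apply: lvalP].
have [a0|a0] := eqVneq (nK `|a|) 0.
  by rewrite a0 mul0r; apply: ln_ge0; apply: lvalP.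
have -> : lnorm (lval (a *: y)) = nK `|a| * ((nK `|a|)^-1 * lnorm (lval (a *: y))).
  by rewrite mulVKf.
apply: ler_wpM2l; first exact: nKge0.
apply: ln_le => n.
rewrite -[nK `|lval y n|](mulKf a0).
apply: ler_wpM2l; first by rewrite invr_ge0 nKge0.
have -> : nK `|a| * nK `|lval y n| = nK `|lval (a *: y) n| by rewrite -nKM.
by apply: ln_ub; apply: lvalP.
Qed.

Lemma lnormK_D (y z : linf) : lnormK (y + z) <= lnormK y + lnormK z.
Proof. by rewrite /lnormK -rmorphD emb_le ln_D. Qed.

Lemma lnormK_Z (a : K) (y : linf) : lnormK (a *: y) = `|a| * lnormK y.
Proof. by rewrite /lnormK ln_Z rmorphM -normE. Qed.

Lemma lnormK_eq0 (y : linf) : lnormK y = 0 -> y = 0.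
Proof.
move=> h; have h0 : lnorm (lval y) = 0.
  by rewrite -[lnorm _]embK; rewrite /lnormK in h; rewrite h -(rmorph0 emb) embK.
apply: linf_eq; apply/funext => n /=.
apply: nK_eq0; apply/le_anti/andP; split; last exact: nKge0.
by rewrite -h0; apply: ln_ub; apply: lvalP.
Qed.

HB.instance Definition _ := Lmodule_isNormed.Build K linf lnormK_D lnormK_Z lnormK_eq0.

Lemma linf_normE (y : linf) : `|y| = emb (lnorm (lval y)). Proof. by []. Qed.

Lemma coord_le (y : linf) n : nK `|lval y n| <= lnorm (lval y).
Proof. by apply: ln_ub; apply: lvalP. Qed.

Lemma emb_ge0 r : 0 <= r -> 0 <= emb r.
Proof. by move=> r0; have := emb_le 0 r; rewrite rmorph0 r0 => ->. Qed.

Lemma emb_gt0 r : 0 < r -> 0 < emb r.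
Proof.
move=> r0; rewrite lt_def emb_ge0 ?ltW // andbT; apply/eqP => h.
by move: r0; rewrite -(embK r) h nK0 ltxx.
Qed.

Lemma emb_lt r s : r < s -> emb r < emb s.
Proof.
move=> rs; rewrite lt_def emb_le (ltW rs) andbT; apply/eqP => h.
by move: rs; rewrite -(embK r) -(embK s) h ltxx.
Qed.

Hypothesis Kc : forall F : set_system K, ProperFilter F -> cauchy F -> cvg F.

Lemma linf_complete (F : set_system linf) : ProperFilter F -> cauchy F -> cvg F.
Proof.
move=> FF /cauchy_ballP Fc.
have Gc n : cvg ((fun y : linf => lval y n) @ F).
  apply: Kc; apply/cauchy_ballP => e e0.
  rewrite near_map2.
  move: (Fc e e0); apply: filterS => -[y z] /=.
  rewrite -!ball_normE /= => h.
  apply: le_lt_trans h; rewrite linf_normE normE emb_le.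
  have -> : lval y n - lval z n = lval (y - z) n by rewrite lvalB.
  exact: coord_le.
pose c n := lim ((fun y : linf => lval y n) @ F).
have Cl : forall d : R, 0 < d -> \forall y \near F, forall n, nK `|c n - lval y n| <= d.
  move=> d d0.
  have ed0 : 0 < emb d by apply: emb_gt0.
  near=> w => m.
  apply/ler_addgt0Pr => eps eps0.
  have eeps0 : 0 < emb eps by apply: emb_gt0.
  have cn := Gc m.
  move/cvgrPdist_lt : cn => /(_ _ eeps0) cn.
  near F => z.
  have h1 : `|c m - lval z m| < emb eps by near: z.
  have h2 : ball w (emb d) z by near: z; near: w; apply: nearP_dep; apply: Fc.
  move: h2; rewrite -ball_normE /= linf_normE lt_def => /andP [_].
  rewrite emb_le => h2.
  move: h1; rewrite (normE (c m - lval z m)) lt_def => /andP [_]; rewrite emb_le => h1.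
  have -> : c m - lval w m = (c m - lval z m) + (lval z m - lval w m) by rewrite addrA subrK.
  apply: le_trans (nKD _ _) _; rewrite addrC; apply: lerD => //.
  rewrite -nKN opprB; apply: le_trans h2.
  have -> : lval w m - lval z m = lval (w - z) m by rewrite lvalB.
  exact: coord_le.
have [y0 Hy0] := filter_ex (Cl 1 ltr01).
have cb : linf_set R K nK c.
  exists (1 + lnorm (lval y0)) => n.
  have -> : c n = (c n - lval y0 n) + lval y0 n by rewrite subrK.
  by apply: le_trans (nKD _ _) _; apply: lerD; [apply: Hy0 | apply: coord_le].
apply/cvg_ex; exists (Linf cb); apply/fcvgrPdist_lt => e e0.
have d0 : 0 < nK `|e|.
  rewrite lt_def nKge0 andbT; apply/eqP => h.
  by move: e0; rewrite (nK_eq0 h) ltxx.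
have ee : e = emb (nK `|e|) by rewrite -normE gtr0_norm.
have d20 : 0 < nK `|e| / 2 by rewrite divr_gt0.
have := Cl _ d20; apply: filterS => w Hw.
rewrite [X in _ < X]ee linf_normE; apply: emb_lt.
apply: le_lt_trans (_ : nK `|e| / 2 < nK `|e|); last by rewrite ltr_pdivrMr // ltr_pMr // ltr1n.
apply: ln_le => m; rewrite lvalB; exact: Hw.
Unshelve. all: by end_near.
Qed.

HB.instance Definition _ := Uniform_isComplete.Build linf linf_complete.

Section TL.
Variables (X : normedModType K) (T : {linear X -> nat -> K}) (M : R).
Hypothesis HM : forall x n, nK `|T x n| <= M * nK `|x|.
Lemma Tin v : linf_set R K nK (T v). Proof. by exists (M * nK `|v|). Qed.
Definition Tp (v : X) : linf := Linf (Tin v).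
Lemma Tp_lin : linear_for *:%R Tp.
Proof. by move=> a u v; apply: linf_eq; rewrite /= linearP. Qed.
HB.instance Definition _ := GRing.isLinear.Build K X linf *:%R Tp Tp_lin.
Definition Tpl : {linear X -> linf} := Tp.
End TL.

Lemma gamma_mono' (E : Type) (Bd : set (E -> K)) (A B : set E) :
  A `<=` B -> (gamma_in R K nK E Bd A <= gamma_in R K nK E Bd B)%E.
Proof.
move=> AB; apply: ereal_sup_le => r [x [phi [a1 [a2 [HA [HB [HI ->]]]]]]].
by exists x, phi, a1, a2; split => // n; apply: AB.
Qed.

Lemma one_onep (X : completeNormedModType K) (C : R) : 0 <= C ->
  assertion1 R K nK X C -> assertion1' R K nK X C.
Proof.
move=> C0 H1 T [M HM].
have bT : bounded_op R K nK X linf (Tpl HM).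
  exists M => v; rewrite linf_normE embK; apply: ln_le => n; exact: HM.
have h := H1 linf (Tpl HM) bT.
have -> : uc R K nK X (nat -> K) lnorm T = uc R K nK X linf (fun y => nK `|y|) (Tpl HM).
  rewrite /uc; congr ereal_sup; apply: eq_imagel => x _.
  rewrite /ca; congr ereal_inf; apply: eq_imagel => N _.
  congr ereal_sup; apply: eq_imagel => kl _.
  by rewrite linf_normE embK lvalB !lval_sum.
apply: le_trans h.
apply: gamma_mono' => _ [g [gl gb] <-].
exists (fun y : linf => g (lval y)); last by apply/funext.
split.
  move=> a y z _ _; rewrite lvalD lvalZ; apply: gl; apply: lvalP.
by move=> y _; rewrite linf_normE embK; apply: gb; apply: lvalP.
Qed.

End Linf.

Definition KcT (K : numFieldType) :=
  forall F : set_system K, ProperFilter F -> cauchy F -> cvg F.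
Section S. Variable R : realType.
Local Open Scope complex_scope.
Local Notation Re := (@complex.Re R).
Local Notation Im := (@complex.Im R).

Lemma ReN (z : R[i]) : Re `|z| = Num.sqrt ((Re z)^+2 + (Im z)^+2).
Proof. by rewrite normc_def. Qed.

Lemma Re_le (z : R[i]) : `|Re z| <= Re `|z|.
Proof.
rewrite ReN -sqrtr_sqr ler_wsqrtr // lerDl; exact: sqr_ge0.
Qed.

Lemma Im_le (z : R[i]) : `|Im z| <= Re `|z|.
Proof.
rewrite ReN -sqrtr_sqr ler_wsqrtr // lerDr; exact: sqr_ge0.
Qed.

Lemma norm_le (u v : R) : Re `|u +i* v| <= `|u| + `|v|.
Proof.
rewrite ReN /= -[X in _ <= X]ger0_norm ?addr_ge0 // -sqrtr_sqr.
apply: ler_wsqrtr.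
have hu : `|u| ^+ 2 = u ^+ 2 by rewrite real_normK // num_real.
have hv : `|v| ^+ 2 = v ^+ 2 by rewrite real_normK // num_real.
have : 0 <= `|u| * `|v| by rewrite mulr_ge0.
rewrite sqrrD hu hv; lra.
Qed.

Lemma Cc : KcT R[i].
Proof.
move=> F FF /cauchy_ballP Fc.
have cRe : cvg ((fun z : R[i] => Re z) @ F).
  apply: cauchy_cvg; apply/cauchy_ballP => e e0.
  rewrite near_map2.
  have e0' : 0 < e%:C by rewrite ltcR.
  move: (Fc _ e0'); apply: filterS => -[x y] /=.
  rewrite -!ball_normE /= ltcE => /andP [_ h].
  apply: le_lt_trans h; have := Re_le (x - y); by case: x y => ? ? [? ?].
have cIm : cvg ((fun z : R[i] => Im z) @ F).
  apply: cauchy_cvg; apply/cauchy_ballP => e e0.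
  rewrite near_map2.
  have e0' : 0 < e%:C by rewrite ltcR.
  move: (Fc _ e0'); apply: filterS => -[x y] /=.
  rewrite -!ball_normE /= ltcE => /andP [_ h].
  apply: le_lt_trans h; have := Im_le (x - y); by case: x y => ? ? [? ?].
set a := lim ((fun z : R[i] => Re z) @ F).
set b := lim ((fun z : R[i] => Im z) @ F).
apply/cvg_ex; exists (a +i* b); apply/fcvgrPdist_lt => e.
rewrite ltcE /= => /andP [/eqP Ie e0].
have e20 : 0 < Re e / 2 by rewrite divr_gt0.
move/cvgrPdist_lt : cRe => /(_ _ e20) hRe.
move/cvgrPdist_lt : cIm => /(_ _ e20) hIm.
apply: filterS2 hRe hIm => z h1 h2.
case: z h1 h2 => zr zi /= h1 h2.
have -> : a +i* b - (zr +i* zi) = (a - zr) +i* (b - zi) by [].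
rewrite ltcE; apply/andP; split.
  by rewrite Ie normc_def.
apply: le_lt_trans (norm_le _ _) _.
lra.
Qed.
End S.


Lemma main_gen (R : realType) (K : numFieldType) (nK : K -> R) (emb : {rmorphism R -> K})
  (embK : forall r, nK (emb r) = r)
  (normE : forall k : K, `|k| = emb (nK `|k|))
  (emb_le : forall r s, (emb r <= emb s) = (r <= s))
  (Kc : KcT K) (X : completeNormedModType K) (C : R) : 0 < C ->
  (assertion1 R K nK X C <-> assertion1' R K nK X C) /\
  (assertion1' R K nK X C <-> assertion2 R K nK X C).
Proof.
move=> C0.
have n0 : nK 0 = 0 := nK0 embK.
have nge : forall a : K, 0 <= nK `|a| := nKge0 normE emb_le.
have nD : forall a b : K, nK `|a + b| <= nK `|a| + nK `|b| := nKD normE emb_le.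
split; split.
- exact: (one_onep embK normE emb_le Kc (ltW C0)).
- move=> h; apply: (two_one (ltW C0)); exact: (onep_two n0 nge nD (ltW C0) h).
- exact: (onep_two n0 nge nD (ltW C0)).
- exact: (two_onep (ltW C0)).
Qed.

Unset Implicit Arguments.

Theorem proposition3p3 (R : realType) :
  (forall (X : completeNormedModType R) (C : R), 0 < C ->
     (assertion1 R R idfun X C <-> assertion1' R R idfun X C) /\
     (assertion1' R R idfun X C <-> assertion2 R R idfun X C)) /\
  (forall (X : completeNormedModType R[i]) (C : R), 0 < C ->
     (assertion1 R R[i] (@complex.Re R) X C <-> assertion1' R R[i] (@complex.Re R) X C) /\
     (assertion1' R R[i] (@complex.Re R) X C <-> assertion2 R R[i] (@complex.Re R) X C)).
Proof.
split => X C C0.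
- apply: (@main_gen R R idfun idfun) => //.
  by move=> F FF; exact: cauchy_cvg.
- apply: (@main_gen R R[i] (@complex.Re R) (real_complex R)) => //.
  + by move=> r s; rewrite lecR.
  + exact: Cc.
Qed.
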